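(* There exist a DAG $G$ and positive integers $g$ and $r_0$ with $4\mid r_0$ such that $\mathrm{OPT}^{(2)}<\mathrm{OPT}^{(1)}$ and $\mathrm{OPT}^{(2)}<\mathrm{OPT}^{(4)}$, where $\mathrm{OPT}^{(j)}$ denotes the MPP optimum of $G$ with $j$ processors, each having fast memory of size $r_0/j$ (same $g$ in all cases).
   Context: Multiprocessor red-blue pebbling (MPP). Input: a DAG $G=(V,E)$ with $n=|V|$ and positive integers $k$ (number of processors), $r$ (fast-memory size per processor), $g$ (cost of an I/O step). $\Delta_{in}$ denotes the maximum in-degree of $G$; sources/sinks are nodes of in-degree/out-degree $0$. A configuration is a tuple $(R^1,\dots,R^k,B)$ of subsets of $V$ ($R^j$ = nodes carrying a red pebble of processor $j$, $B$ = nodes carrying a blue pebble); it is valid if $|R^j|\le r$ for all $j$. The initial configuration has all sets empty; a configuration is terminal if every sink lies in $B\cup\bigcup_j R^j$. The transition rules are: (R1) for some $m\le k$, pairwise distinct processors $j_1,\dots,j_m$ and nodes $v_1,\dots,v_m$ with $v_i\in R^{j_i}$, add each $v_i$ to $B$ (cost $g$); (R2) for some $m\le k$, pairwise distinct processors $j_1,\dots,j_m$ and nodes $v_1,\dots,v_m\in B$, add each $v_i$ to $R^{j_i}$ (cost $g$); (R3) for some $m\le k$, pairwise distinct processors $j_1,\dots,j_m$ and nodes $v_1,\dots,v_m$ such that every in-neighbor of $v_i$ lies in $R^{j_i}$, add each $v_i$ to $R^{j_i}$ (cost $1$); (R4) remove a single red or blue pebble (cost $0$). A pebbling strategy is a sequence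 of valid configurations starting at the initial configuration and ending at a terminal one, each obtained from its predecessor by one rule; its cost is the sum of the costs of the rules applied. $\mathrm{OPT}$ denotes the minimum cost of a pebbling strategy. Applications of (R1),(R2) are called I/O steps and applications of (R3) compute steps. *)

(* Defs.v *)
From mathcomp Require Import all_boot.
Set Implicit Arguments. Unset Strict Implicit. Unset Printing Implicit Defensive.

(* A DAG on nodes 'I_n is an edge relation e (e u v = edge u -> v) with no cycle. *)
Definition acyclic (n : nat) (e : rel 'I_n) : Prop :=
  forall x y, e x y -> ~~ connect e y x.

(* Configuration (R^1,...,R^k, B): R j = red pebbles of processor j, B = blue pebbles. *)
Definition config (n k : nat) := ({ffun 'I_k -> {set 'I_n}} * {set 'I_n})%type.

Definition valid_config (n k r : nat) (C : config n k) : Prop :=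
  forall j : 'I_k, #|C.1 j| <= r.

Definition init_config (n k : nat) : config n k := ([ffun _ => set0], set0).

Definition is_sink (n : nat) (e : rel 'I_n) (v : 'I_n) : bool := [forall w, ~~ e v w].

Definition terminal (n k : nat) (e : rel 'I_n) (C : config n k) : Prop :=
  forall v, is_sink e v -> v \in C.2 \/ exists j : 'I_k, v \in C.1 j.

Definition add_red (n k : nat) (R : {ffun 'I_k -> {set 'I_n}}) (P : {set 'I_k})
  (v : 'I_k -> 'I_n) : {ffun 'I_k -> {set 'I_n}} :=
  [ffun j => if j \in P then v j |: R j else R j].

Inductive step (n k : nat) (e : rel 'I_n) (g : nat) : config n k -> config n k -> nat -> Prop :=
| R1 : forall (R : {ffun 'I_k -> {set 'I_n}}) (B : {set 'I_n}) (P : {set 'I_k}) (v : 'I_k -> 'I_n),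
    (forall j, j \in P -> v j \in R j) ->
    step e g (R, B) (R, B :|: [set v j | j in P]) g
| R2 : forall (R : {ffun 'I_k -> {set 'I_n}}) (B : {set 'I_n}) (P : {set 'I_k}) (v : 'I_k -> 'I_n),
    (forall j, j \in P -> v j \in B) ->
    step e g (R, B) (add_red R P v, B) g
| R3 : forall (R : {ffun 'I_k -> {set 'I_n}}) (B : {set 'I_n}) (P : {set 'I_k}) (v : 'I_k -> 'I_n),
    (forall j, j \in P -> forall u, e u (v j) -> u \in R j) ->
    step e g (R, B) (add_red R P v, B) 1
| R4red : forall (R : {ffun 'I_k -> {set 'I_n}}) (B : {set 'I_n}) (j : 'I_k) x, x \in R j ->
    step e g (R, B) ([ffun j' => if j' == j then R j :\ x else R j'], B) 0
| R4blue : forall (R : {ffun 'I_k -> {set 'I_n}}) (B : {set 'I_n}) x, x \in B ->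
    step e g (R, B) (R, B :\ x) 0.

Inductive pebbling (n k : nat) (e : rel 'I_n) (r g : nat) : config n k -> nat -> Prop :=
| peb_done : forall C, terminal e C -> pebbling e r g C 0
| peb_step : forall C C' s c, step e g C C' s -> valid_config r C' ->
    pebbling e r g C' c -> pebbling e r g C (s + c).

Definition has_strategy (n : nat) (e : rel 'I_n) (k r g c : nat) : Prop :=
  pebbling e r g (init_config n k) c.

Definition is_OPT (n : nat) (e : rel 'I_n) (k r g c : nat) : Prop :=
  has_strategy e k r g c /\ forall c', has_strategy e k r g c' -> c <= c'.

(* Main.v *)
Require Import Defs.
From mathcomp Require Import all_boot.
Set Implicit Arguments. Unset Strict Implicit. Unset Printing Implicit Defensive.

Definition E : rel 'I_6 := fun u v => (u == ord0) && (v != ord0).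
Definition S6 : {set 'I_6} := [set~ ord0].
Definition N1 : 'I_6 := @Ordinal 6 1 isT.

Lemma sinkE v : is_sink E v = (v != ord0).
Proof.
rewrite /is_sink; case: (v =P ord0) => [->|hv] /=.
  by apply/forallP => /(_ N1).
by apply/forallP => w; rewrite /E; case: (v =P ord0).
Qed.

Lemma acycE : acyclic E.
Proof.
move=> x y /andP [/eqP -> hy]; apply/negP => /connectP [p].
case: p => [_ /= Hy|z p /=]; first by rewrite Hy eqxx in hy.
by rewrite /E (negbTE hy).
Qed.

Lemma cardS6 : #|S6| = 5.
Proof. by rewrite cardsC1 card_ord. Qed.

Lemma card_addI (T : finType) (a : T) A S : #|(a |: A) :&: S| <= #|A :&: S|.+1.
Proof.
apply: leq_trans (subset_leq_card (_ : _ \subset a |: (A :&: S))) _.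
  by apply/subsetP => x; rewrite !inE => /andP [/orP [->|->] ->] //; rewrite orbT.
by rewrite cardsU1; case: (a \in _).
Qed.

Lemma lb1 (C : config 6 1) c : pebbling E 8 5 C c -> C.2 = set0 -> 5 <= #|C.1 ord0 :&: S6| + c.
Proof.
elim => {C c} [C term | C C' s c st val peb IH] HB.
  rewrite addn0; apply: (leq_trans (eq_leq (esym cardS6))); apply: subset_leq_card; apply/subsetP => v vS.
  have := term v; rewrite sinkE; move: vS; rewrite !inE => vS; rewrite vS HB inE.
  case=> // [[j]]; rewrite (ord1 j) => Hj; by rewrite Hj.
move: HB IH; case: st => //=.
- by move=> *; rewrite addnCA leq_addr.
- by move=> *; rewrite addnCA leq_addr.
- move=> R B P v _ HB /(_ HB); rewrite /add_red ffunE.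
  case: ((ord0 : 'I_1) \in P) => H; apply: leq_trans H _.
    by rewrite addnCA add1n -addSn leq_add2r card_addI.
  by rewrite leq_add2l leq_addl.
- move=> R B j x; rewrite (ord1 j) => _ HB /(_ HB); rewrite ffunE add0n => H; apply: leq_trans H _.
  rewrite leq_add2r; case: (_ == _) => //; apply: subset_leq_card.
  by apply: setSI; apply: subsetDl.
- by move=> R B x + HB; rewrite HB inE.
Qed.

Lemma three (A : {set 'I_6}) a w : #|w |: A| <= 2 -> ord0 \in A -> a \in A ->
  a != ord0 -> w != ord0 -> a = w.
Proof.
move=> Hc H0 Ha a0 w0; apply/eqP; apply: contraTT Hc => ne; rewrite -ltnNge.
have sub : ord0 |: [set a; w] \subset w |: A.
  apply/subsetP => x; rewrite !inE => /orP [|/orP []] /eqP ->; by rewrite ?H0 ?Ha ?eqxx ?orbT.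
apply: leq_trans (subset_leq_card sub).
by rewrite cardsU1 cards2 !inE ne negb_or eq_sym a0 eq_sym w0.
Qed.

Lemma lb4 (C : config 6 4) c : pebbling E 2 5 C c -> C.2 = set0 ->
  (forall j a b, a \in C.1 j -> b \in C.1 j -> a != ord0 -> b != ord0 -> a = b) -> 5 <= c.
Proof.
elim => {C c} [C term | C C' s c st val peb IH] HB Hinv.
  pose f (v : 'I_6) := odflt ord0 [pick j | v \in C.1 j].
  have fP v : v \in S6 -> v \in C.1 (f v).
    move=> vS; have := term v; rewrite sinkE; move: vS; rewrite !inE => vS.
    rewrite vS HB inE => /(_ isT) [//|[j Hj]].
    rewrite /f; case: pickP => [j' //|/(_ j)]; by rewrite Hj.
  have inj : {in S6 &, injective f}.
    move=> a b aS bS fab; apply: (Hinv (f a)); first exact: fP.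
      by rewrite fab; apply: fP.
      by move: aS; rewrite !inE.
    by move: bS; rewrite !inE.
  have := max_card (f @: S6); rewrite card_in_imset // cardS6 card_ord //.
move: HB Hinv IH val; case: st => //=.
- move=> R B P v Hc HB Hinv /(_ HB) IH val; rewrite add1n; apply: ltnW; apply: IH.
  move=> j a b; have := val j; rewrite /= /add_red !ffunE.
  case jP: (j \in P); last by move=> _; apply: Hinv.
  have H0 : v j != ord0 -> ord0 \in R j.
    by move=> h; apply: (Hc j jP); rewrite /E eqxx h.
  move=> Hcard; rewrite !inE => /orP [/eqP ->|Ha] /orP [/eqP ->|Hb] a0 b0 //.
  - by apply/esym/(three Hcard) => //; apply: H0.
  - by apply/(three Hcard) => //; apply: H0.
  - by apply: (Hinv j).
- move=> R B j x _ HB Hinv /(_ HB) IH _; rewrite add0n; apply: IH.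
  move=> j' a b; rewrite !ffunE; case: (_ == _); last exact: Hinv.
  rewrite !inE => /andP [_ Ha] /andP [_ Hb]; exact: Hinv Ha Hb.
- by move=> R B x + HB; rewrite HB inE.
Qed.

From Stdlib Require Import Classical.

Lemma min_ex (P : nat -> Prop) : (exists n, P n) -> exists m, P m /\ forall c, P c -> m <= c.
Proof.
move=> [n Pn]; elim: n {-2}n (leqnn n) Pn => [|N IHN] n Hn Pn.
  by exists n; split => // c _; move: Hn; rewrite leqn0 => /eqP ->.
case: (classic (exists c, P c /\ c < n)) => [[c [Pc cn]]|H].
  by apply: (IHN c) => //; rewrite -ltnS; apply: leq_trans cn Hn.
exists n; split => // c Pc; rewrite leqNgt; apply/negP => cn; apply: H; by exists c.
Qed.

Section Gen.
Variables (n k : nat) (e : rel 'I_n) (r g : nat).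

Lemma ps3 (R : {ffun 'I_k -> {set 'I_n}}) B (P : {set 'I_k}) v c : (forall j, j \in P -> forall u, e u (v j) -> u \in R j) ->
  valid_config r (add_red R P v, B) -> pebbling e r g (add_red R P v, B) c ->
  pebbling e r g (R, B) c.+1.
Proof. by move=> H V Pb; rewrite -add1n; apply: (peb_step _ V Pb); apply: R3. Qed.

Lemma ps1 (R : {ffun 'I_k -> {set 'I_n}}) B (P : {set 'I_k}) v c : (forall j, j \in P -> v j \in R j) ->
  valid_config r (R, B :|: [set v j | j in P]) ->
  pebbling e r g (R, B :|: [set v j | j in P]) c -> pebbling e r g (R, B) (g + c).
Proof. by move=> H V Pb; apply: (peb_step _ V Pb); apply: R1. Qed.

Lemma ps4 (R : {ffun 'I_k -> {set 'I_n}}) B j x c : x \in R j ->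
  valid_config r ([ffun j' => if j' == j then R j :\ x else R j'], B) ->
  pebbling e r g ([ffun j' => if j' == j then R j :\ x else R j'], B) c ->
  pebbling e r g (R, B) c.
Proof. by move=> H V Pb; rewrite -[c]add0n; apply: (peb_step _ V Pb); apply: R4red. Qed.

Lemma cadd (R : {ffun 'I_k -> {set 'I_n}}) (P : {set 'I_k}) v j m : #|R j| <= m -> #|add_red R P v j| <= m.+1.
Proof.
move=> H; rewrite /add_red ffunE; case: (j \in P); last exact: leqW.
by rewrite cardsU1 -add1n; apply: leq_add => //; case: (_ \notin _).
Qed.

Lemma vadd (R : {ffun 'I_k -> {set 'I_n}}) (P : {set 'I_k}) v (B : {set 'I_n}) m :
  (forall j, #|R j| <= m) -> valid_config m.+1 (add_red R P v, B).
Proof. by move=> H j; apply: cadd. Qed.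

End Gen.

Definition N2 : 'I_6 := @Ordinal 6 2 isT.
Definition N3 : 'I_6 := @Ordinal 6 3 isT.
Definition N4 : 'I_6 := @Ordinal 6 4 isT.
Definition N5 : 'I_6 := @Ordinal 6 5 isT.

Lemma sinks_cases (v : 'I_6) : v != ord0 -> v = N1 \/ v = N2 \/ v = N3 \/ v = N4 \/ v = N5.
Proof.
case: v => [[|[|[|[|[|[|m]]]]]] Hv] // _.
- by left; apply: val_inj.
- by right; left; apply: val_inj.
- by right; right; left; apply: val_inj.
- by right; right; right; left; apply: val_inj.
- by right; right; right; right; apply: val_inj.
Qed.

Lemma strat1 : has_strategy E 1 8 5 6.
Proof.
rewrite /has_strategy /init_config.
apply: (@ps3 _ _ _ _ _ _ _ setT (fun _ => ord0)).
  by move=> j _ u; rewrite /E eqxx andbF.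
  by apply: vadd => j; rewrite ffunE cards0.
apply: (@ps3 _ _ _ _ _ _ _ setT (fun _ => N1)).
  by move=> j _ u /andP [/eqP -> _]; rewrite !ffunE !inE.
  by apply: vadd => j; apply: cadd; rewrite ffunE cards0.
apply: (@ps3 _ _ _ _ _ _ _ setT (fun _ => N2)).
  by move=> j _ u /andP [/eqP -> _]; rewrite !ffunE !inE.
  by apply: vadd => j; do 2 apply: cadd; rewrite ffunE cards0.
apply: (@ps3 _ _ _ _ _ _ _ setT (fun _ => N3)).
  by move=> j _ u /andP [/eqP -> _]; rewrite !ffunE !inE.
  by apply: vadd => j; do 3 apply: cadd; rewrite ffunE cards0.
apply: (@ps3 _ _ _ _ _ _ _ setT (fun _ => N4)).
  by move=> j _ u /andP [/eqP -> _]; rewrite !ffunE !inE.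
  by apply: vadd => j; do 4 apply: cadd; rewrite ffunE cards0.
apply: (@ps3 _ _ _ _ _ _ _ setT (fun _ => N5)).
  by move=> j _ u /andP [/eqP -> _]; rewrite !ffunE !inE.
  by apply: vadd => j; do 5 apply: cadd; rewrite ffunE cards0.
apply: peb_done => v; rewrite sinkE => /sinks_cases H; right; exists ord0.
by case: H => [->|[->|[->|[->|->]]]]; rewrite !ffunE !inE.
Qed.

Definition P1 : 'I_2 := @Ordinal 2 1 isT.

Lemma strat2 : has_strategy E 2 4 5 4.
Proof.
rewrite /has_strategy /init_config.
apply: (@ps3 _ _ _ _ _ _ _ setT (fun _ => ord0)).
  by move=> j _ u; rewrite /E eqxx andbF.
  by apply: vadd => j; rewrite ffunE cards0.
apply: (@ps3 _ _ _ _ _ _ _ setT (fun j => if j == ord0 then N1 else N4)).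
  by move=> j _ u /andP [/eqP -> _]; rewrite !ffunE !inE ?eqxx ?orbT.
  by apply: vadd => j; apply: cadd; rewrite ffunE cards0.
apply: (@ps3 _ _ _ _ _ _ _ setT (fun j => if j == ord0 then N2 else N5)).
  by move=> j _ u /andP [/eqP -> _]; rewrite !ffunE !inE eqxx !orbT.
  by apply: vadd => j; do 2 apply: cadd; rewrite ffunE cards0.
apply: (@ps3 _ _ _ _ _ _ _ [set ord0] (fun _ => N3)).
  by move=> j _ u /andP [/eqP -> _]; rewrite !ffunE !inE ?eqxx ?orbT.
  by apply: vadd => j; do 3 apply: cadd; rewrite ffunE cards0.
apply: peb_done => v; rewrite sinkE => /sinks_cases H; right.
case: H => [->|[->|[->|[->|->]]]].
- by exists ord0; rewrite !ffunE !inE.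
- by exists ord0; rewrite !ffunE !inE.
- by exists ord0; rewrite !ffunE !inE.
- by exists P1; rewrite !ffunE !inE.
- by exists P1; rewrite !ffunE !inE.
Qed.

Definition Q1 : 'I_4 := @Ordinal 4 1 isT.
Definition Q2 : 'I_4 := @Ordinal 4 2 isT.
Definition Q3 : 'I_4 := @Ordinal 4 3 isT.

Lemma strat4 : has_strategy E 4 2 5 8.
Proof.
rewrite /has_strategy /init_config.
apply: (@ps3 _ _ _ _ _ _ _ setT (fun _ => ord0)).
  by move=> j _ u; rewrite /E eqxx andbF.
  by apply: vadd => j; rewrite ffunE cards0.
apply: (@ps3 _ _ _ _ _ _ _ [set ord0] (fun _ => N1)).
  by move=> j _ u /andP [/eqP -> _]; rewrite !ffunE !inE ?eqxx ?orbT.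
  by apply: vadd => j; apply: cadd; rewrite ffunE cards0.
apply: (@ps1 _ _ _ _ _ _ _ [set ord0] (fun _ => N1) 1).
  by move=> j; rewrite inE => /eqP ->; rewrite !ffunE !inE.
  by move=> j; do 2 apply: cadd; rewrite ffunE cards0.
apply: (@ps4 _ _ _ _ _ _ _ ord0 N1).
  by rewrite !ffunE !inE.
  move=> j; rewrite ffunE; case: (_ == _); last by do 2 apply: cadd; rewrite ffunE cards0.
  by apply: leq_trans (subset_leq_card (subsetDl _ _)) _; do 2 apply: cadd; rewrite ffunE cards0.
apply: (@ps3 _ _ _ _ _ _ _ setT (fun j => nth N5 [:: N5; N2; N3; N4] j)).
  by move=> j _ u /andP [/eqP -> _]; rewrite !ffunE !inE eqxx; case: (_ == _); rewrite !inE ?eqxx ?orbT.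
  apply: vadd => j; rewrite ffunE; case: (j =P ord0) => [_|/eqP jn].
    apply: leq_trans (subset_leq_card (_ : _ \subset [set ord0] :|: set0)) _.
      by apply/subsetP => x; rewrite !ffunE !inE; case: (x =P N1) => //= _ /orP [->|].
    by rewrite setU0 cards1.
  rewrite ffunE inE (negbTE jn) ffunE inE.
  by rewrite ffunE setU0 cards1.
apply: peb_done => v; rewrite sinkE => /sinks_cases H.
case: H => [->|[->|[->|[->|->]]]].
- by left; rewrite inE; apply/orP; right; apply/imsetP; exists ord0; rewrite ?inE.
- by right; exists Q1; rewrite !ffunE !inE.
- by right; exists Q2; rewrite !ffunE !inE.
- by right; exists Q3; rewrite !ffunE !inE.
- by right; exists ord0; rewrite !ffunE !inE.
Qed.

Theorem lemma10 :
  exists (n : nat) (e : rel 'I_n) (g r0 c1 c2 c4 : nat),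
    [/\ acyclic e, 0 < g, 0 < r0 & 4 %| r0] /\
    [/\ is_OPT e 1 r0 g c1, is_OPT e 2 (r0 %/ 2) g c2 & is_OPT e 4 (r0 %/ 4) g c4] /\
    c2 < c1 /\ c2 < c4.
Proof.
have [c1 [H1 M1]] := min_ex (ex_intro _ 6 strat1).
have [c2 [H2 M2]] := min_ex (ex_intro _ 4 strat2).
have [c4 [H4 M4]] := min_ex (ex_intro _ 8 strat4).
exists 6, E, 5, 8, c1, c2, c4; split; first by split => //; exact: acycE.
split; first by split.
have c2le : c2 <= 4 by apply: M2; exact: strat2.
have L1 := lb1 H1 erefl.
split.
  apply: leq_trans (_ : 5 <= c1); first by rewrite ltnS.
  by apply: leq_trans L1 _; rewrite /init_config /= ffunE set0I cards0.
apply: leq_trans (_ : 5 <= c4); first by rewrite ltnS.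
apply: (lb4 H4 erefl) => j a b; by rewrite ffunE inE.
Qed.
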